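(* Let $l<u$ be real, let $\Delta Q$ be real with $0<\Delta Q\le u-l$, and let $\epsilon\ge0$, $0\le\delta<1$. Then for every $b>0$, $\frac{\partial \Delta C(b)}{\partial b}\le 0$, with equality if and only if $\Delta Q=u-l$. Consequently, at every $b>0$ with $\epsilon-\log\Delta C(b)-\log(1-\delta)\ne0$, $f$ is differentiable with $f'(b)\le 0$, and $f'(b)=0$ if and only if $\Delta Q=u-l$.
   Context: For $b>0$ and $p\in[l,u]$, $C_p(b)= 1-\frac12\left(e^{-\frac{p-l}{b}}+e^{-\frac{u-p}{b}}\right)$ (the integral $\int_l^u\frac{1}{2b}e^{-|x-p|/b}dx$), and $\Delta C(b)=\frac{C_{l+\Delta Q}(b)}{C_l(b)}$. The map $f$ is defined for $b>0$ with $\epsilon-\log\Delta C(b)-\log(1-\delta)\neq 0$ by $f(b)=\frac{\Delta Q}{\epsilon-\log\Delta C(b)-\log(1-\delta)}$. *)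

(* Defs.v *)
From Stdlib Require Import Reals.
Open Scope R_scope.

Definition Cp (l u p b : R) : R :=
  1 - / 2 * (exp (- ((p - l) / b)) + exp (- ((u - p) / b))).

Definition DeltaC (l u dQ b : R) : R :=
  Cp l u (l + dQ) b / Cp l u l b.

Definition fmap (l u dQ eps delta b : R) : R :=
  dQ / (eps - ln (DeltaC l u dQ b) - ln (1 - delta)).

(* Main.v *)
Require Import Defs.
From Stdlib Require Import Reals Lra.
From Coquelicot Require Import Coquelicot.
Open Scope R_scope.

Definition G (L q b : R) := (1 - /2*(exp(-(q/b)) + exp(-((L-q)/b)))) / (/2*(1 - exp(-(L/b)))).

Lemma G_eq l u dQ b : DeltaC l u dQ b = G (u-l) dQ b.
Proof. unfold DeltaC, Cp, G. replace (l+dQ-l) with dQ by ring. replace (u-(l+dQ)) with (u-l-dQ) by ring.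
 replace (l-l) with 0 by ring. rewrite Rdiv_0_l, Ropp_0, exp_0.
 replace (1 - / 2 * (1 + exp (- ((u - l) / b)))) with (/2*(1 - exp (- ((u - l) / b)))) by field.
 reflexivity. Qed.

Lemma G_der L q b : 0 < b -> 0 < L -> is_derive (G L q) b
  (-(q*exp(-(q/b))*(1-exp(-((L-q)/b)))^2 + (L-q)*exp(-((L-q)/b))*(1-exp(-(q/b)))^2)/(b^2*(1-exp(-(q/b))*exp(-((L-q)/b)))^2)).
Proof. intros hb hL.
 assert (Hxy: exp(-(L*/b)) = exp(-(q*/b))*exp(-((L-q)*/b))) by (rewrite <- exp_plus; f_equal; field; lra).
 assert (H1 : exp(-(L*/b)) < 1).
 { rewrite <- exp_0. apply exp_increasing. assert (0 < L */b) by (apply Rmult_lt_0_compat; [lra| apply Rinv_0_lt_compat; lra]). lra. }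
 unfold G. auto_derive.
 - repeat split; try lra.
 - unfold Rdiv. rewrite Hxy in *. set (x := exp(-(q*/b))) in *. set (y:=exp(-((L-q)*/b))) in *.
   field. split; lra.
Qed.

Lemma exp_neg_lt1 a : 0 < a -> exp (- a) < 1.
Proof. intros. rewrite <- exp_0. apply exp_increasing. lra. Qed.

Lemma exp_neg_le1 a : 0 <= a -> exp (- a) <= 1.
Proof. intros [H|H]. left; apply exp_neg_lt1; auto. subst. rewrite Ropp_0, exp_0. lra. Qed.

Theorem lemma4p2 (l u dQ eps delta : R)
  (hlu : l < u) (hdQ0 : 0 < dQ) (hdQ1 : dQ <= u - l)
  (heps : 0 <= eps) (hd0 : 0 <= delta) (hd1 : delta < 1) :
  (forall b : R, 0 < b ->
     exists d : R, derivable_pt_lim (DeltaC l u dQ) b d /\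
       d <= 0 /\ (d = 0 <-> dQ = u - l)) /\
  (forall b : R, 0 < b ->
     eps - ln (DeltaC l u dQ b) - ln (1 - delta) <> 0 ->
     exists d : R, derivable_pt_lim (fmap l u dQ eps delta) b d /\
       d <= 0 /\ (d = 0 <-> dQ = u - l)).
Proof.
  assert (key : forall b, 0 < b -> exists d, is_derive (DeltaC l u dQ) b d /\
       d <= 0 /\ (d = 0 <-> dQ = u - l) /\ 0 < DeltaC l u dQ b).
  { intros b hb.
    set (x := exp(-(dQ/b))). set (y := exp(-((u-l-dQ)/b))).
    assert (hx1 : x < 1) by (apply exp_neg_lt1; unfold Rdiv; apply Rmult_lt_0_compat; [lra|apply Rinv_0_lt_compat; lra]).
    assert (hx0 : 0 < x) by apply exp_pos.
    assert (hy0 : 0 < y) by apply exp_pos.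
    assert (hy1 : y <= 1) by (apply exp_neg_le1; unfold Rdiv; apply Rmult_le_pos; [lra|left; apply Rinv_0_lt_compat; lra]).
    assert (hxy : x * y < 1) by nra.
    exists (-(dQ*x*(1-y)^2 + (u-l-dQ)*y*(1-x)^2)/(b^2*(1-x*y)^2)).
    assert (hK : 0 <= dQ*x*(1-y)^2 + (u-l-dQ)*y*(1-x)^2).
    { assert (0 <= dQ*x*(1-y)^2) by (apply Rmult_le_pos; [nra|nra]).
      assert (0 <= (u-l-dQ)*y*(1-x)^2) by (apply Rmult_le_pos; [nra|nra]). lra. }
    assert (hden : 0 < b^2*(1-x*y)^2).
    { apply Rmult_lt_0_compat; apply pow_lt; lra. }
    split; [|split; [|split]].
    - eapply is_derive_ext. intros t; symmetry; apply G_eq.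
      apply G_der; lra.
    - unfold Rdiv. rewrite Ropp_mult_distr_l_reverse.
      assert (0 <= (dQ * x * (1 - y) ^ 2 + (u - l - dQ) * y * (1 - x) ^ 2) * / (b ^ 2 * (1 - x * y) ^ 2)).
      { apply Rmult_le_pos; auto. left; apply Rinv_0_lt_compat; auto. }
      lra.
    - split.
      + intros H0. destruct (Req_dec dQ (u-l)) as [E|E]; auto. exfalso.
        assert (0 < (u-l-dQ)*y*(1-x)^2).
        { apply Rmult_lt_0_compat. apply Rmult_lt_0_compat; lra. apply pow_lt; lra. }
        assert (0 <= dQ*x*(1-y)^2) by (apply Rmult_le_pos; [nra|nra]).
        assert (dQ * x * (1 - y) ^ 2 + (u - l - dQ) * y * (1 - x) ^ 2 = 0).
        { apply (f_equal (fun z => - z * (b ^ 2 * (1 - x * y) ^ 2))) in H0.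
          rewrite Ropp_0, Rmult_0_l in H0. rewrite <- H0. field. lra. }
        lra.
      + intros E. unfold y. replace (u-l-dQ) with 0 by lra. rewrite Rdiv_0_l, Ropp_0, exp_0.
        change (- (dQ * x * (1 - 1) ^ 2 + 0 * 1 * (1 - x) ^ 2) / (b ^ 2 * (1 - x * 1) ^ 2) = 0). unfold Rdiv; ring.
    - rewrite G_eq. unfold G. fold x.
      replace (u-l-dQ) with (u-l-dQ) by ring. fold y.
      assert (Hxy: exp(-((u-l)/b)) = x*y) by (unfold x, y; rewrite <- exp_plus; f_equal; field; lra).
      rewrite Hxy. apply Rdiv_lt_0_compat; lra. }
  split.
  - intros b hb. destruct (key b hb) as [d [h1 [h2 [h3 h4]]]].
    exists d. split; auto. apply is_derive_Reals; auto.
  - intros b hb hD. destruct (key b hb) as [d [h1 [h2 [h3 h4]]]].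
    set (g0 := DeltaC l u dQ b) in *.
    set (Den := fun t => eps - ln (DeltaC l u dQ t) - ln (1 - delta)).
    assert (hDen : is_derive Den b (-(d/g0))).
    { apply is_derive_Reals.
      pose proof (derivable_pt_lim_comp (DeltaC l u dQ) ln b d (/g0) (proj1 (is_derive_Reals _ _ _) h1) (derivable_pt_lim_ln g0 h4)) as hl.
      pose proof (derivable_pt_lim_minus _ _ b _ _ (derivable_pt_lim_minus _ _ b _ _ (derivable_pt_lim_const eps b) hl) (derivable_pt_lim_const (ln (1-delta)) b)) as hm.
      replace (-(d/g0)) with (0 - /g0 * d - 0) by (field; lra).
      exact hm. }
    assert (hf : is_derive (fun t => dQ / Den t) b ((0 * Den b - dQ * (-(d/g0))) / Den b ^ 2)).
    { apply is_derive_div; auto. apply is_derive_Reals, derivable_pt_lim_const. }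
    exists (dQ * d / (g0 * Den b ^ 2)).
    assert (hDb : Den b <> 0) by exact hD.
    assert (hDp : 0 < Den b ^ 2) by (apply pow2_gt_0; auto).
    split; [|split].
    + apply is_derive_Reals. eapply is_derive_ext. intros t; reflexivity.
      replace (dQ * d / (g0 * Den b ^ 2)) with ((0 * Den b - dQ * (-(d/g0))) / Den b ^ 2)
        by (field; split; lra).
      exact hf.
    + unfold Rdiv. assert (0 < / (g0 * Den b ^ 2)) by (apply Rinv_0_lt_compat; nra).
      assert (hq : dQ * d <= 0) by (assert (0 <= dQ * (-d)) by (apply Rmult_le_pos; lra); lra).
      rewrite <- (Rmult_0_l (/ (g0*Den b^2))). apply Rmult_le_compat_r; lra.
    + split.
      * intros H0. apply h3. unfold Rdiv in H0.
        assert (0 < / (g0 * Den b ^ 2)) by (apply Rinv_0_lt_compat; nra).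
        destruct (Rmult_integral _ _ H0) as [H5|H5]; [|lra].
        destruct (Rmult_integral _ _ H5); lra.
      * intros E. rewrite (proj2 h3 E). unfold Rdiv. ring.
Qed.
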